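(* Let $\{a_k\}_{k\in\mathbb Z}$ be a sequence of real numbers with $a_k=0$ for all $k\le0$, such that $\{a_k\}_{k\ge1}\in\mathrm{GM}$ and $\lim_{k\to\infty}a_k=0$. Then $\{a_k\}_{k\in\mathbb Z}\in\overline{\mathrm{GM}}$.
   Context: A sequence $\{a_k\}_{k\ge1}$ belongs to $\mathrm{GM}$ if there exist $C>0$ and $\lambda>1$ such that for every $n\ge1$, $\sum_{k=n}^{2n}|a_k-a_{k+1}|\le\frac Cn\sum_{n/\lambda\le k\le\lambda n}|a_k|$. For a two-sided sequence $a$: $|\Delta a_k|=|a_k-a_{k+1}|$ for $k>0$, $|\Delta a_k|=|a_k-a_{k-1}|$ for $k<0$, $|\Delta a_0|=|a_0-a_1|+|a_0-a_{-1}|$; for $k\ge0$, $\widehat a_{2^k}=\sup_{2^k\le|m|<2^{k+1}}\frac1{|m|+1}|\sum_{j=0}^ma_j|$, where for $m<0$, $\sum_{j=0}^ma_j$ means $\sum_{j=m}^0a_j$; $[\cdot]$ is the floor function. The sequence $a$ belongs to $\overline{\mathrm{GM}}$ if there is $C'>0$ such that for every $n\ge0$, $\sum_{[2^{n-1}]\le|m|<2^n}|\Delta a_m|\le C'\sup_{k\in\mathbb N_0}\min(1,2^{k-n})\widehat a_{2^k}$. *)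

(* Defs.v *)
From HB Require Import structures.
From mathcomp Require Import all_boot all_order all_algebra.
From mathcomp Require Import all_classical all_reals all_analysis.
Set Implicit Arguments. Unset Strict Implicit. Unset Printing Implicit Defensive.
Import Order.TTheory GRing.Theory Num.Theory.
Local Open Scope ring_scope.

(* The right sum is a finite sum over 1 <= k <= truncn (lambda n) (every
   admissible k satisfies k <= lambda n). *)
Definition GM (R : realType) (b : nat -> R) : Prop :=
  exists C : R, exists lam : R, 0 < C /\ 1 < lam /\
    forall n : nat, (1 <= n)%N ->
      \sum_(n <= k < (2 * n).+1) `|b k - b k.+1|
      <= C / n%:R *
         \sum_(1 <= k < (Num.truncn (lam * n%:R)).+1
                 | (n%:R / lam <= k%:R) && (k%:R <= lam * n%:R)) `|b k|.

Definition Dabs (R : realType) (a : int -> R) (m : int) : R :=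
  if (0 < m)%R then `|a m - a (m + 1)|
  else if (m < 0)%R then `|a m - a (m - 1)|
  else `|a 0 - a 1| + `|a 0 - a (-1)|.

Definition psum (R : realType) (a : int -> R) (m : int) : R :=
  if (0 <= m)%R then \sum_(0 <= j < `|m|%N.+1) a (Posz j)
  else \sum_(0 <= j < `|m|%N.+1) a (- Posz j).

(* \hat a_{2^k} = sup_{2^k <= |m| < 2^(k+1)} |sum_{j=0}^m a_j| / (|m|+1);
   the sup is over a finite nonempty set of nonnegative numbers, hence a max. *)
Definition ahat (R : realType) (a : int -> R) (k : nat) : R :=
  \big[Num.max/0]_(2 ^ k <= j < 2 ^ k.+1)
     Num.max (`|psum a (Posz j)| / (j%:R + 1)) (`|psum a (- Posz j)| / (j%:R + 1)).

(* sum_{[2^(n-1)] <= |m| < 2^n} |Delta a_m|, written out over j = |m|: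
   the term j = 0 (only for n = 0) is |Delta a_0|, each j >= 1 contributes
   |Delta a_j| + |Delta a_{-j}|.  Note (2^n)./2 = [2^(n-1)]. *)
Definition dyadic_var (R : realType) (a : int -> R) (n : nat) : R :=
  \sum_((2 ^ n)./2 <= j < 2 ^ n)
     (if j == 0%N then Dabs a 0 else Dabs a (Posz j) + Dabs a (- Posz j)).

(* Class GM-bar for a two-sided sequence; the sup (possibly +oo) is taken in
   the extended reals. *)
Definition GMbar (R : realType) (a : int -> R) : Prop :=
  exists C' : R, 0 < C' /\
    forall n : nat,
      ((dyadic_var a n)%:E <=
       C'%:E * ereal_sup (range (fun k : nat =>
          (Num.min 1 ((2 : R) ^ (Posz k - Posz n)) * ahat a k)%:E)))%E.

(* Main.v *)
Require Import Defs.
From HB Require Import structures.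
From mathcomp Require Import all_boot all_order all_algebra.
From mathcomp Require Import all_classical all_reals all_analysis.
From mathcomp Require Import zify ring lra.
Import Order.TTheory GRing.Theory Num.Theory.
Import numFieldNormedType.Exports.
Local Open Scope classical_set_scope.
Local Open Scope ring_scope.
Section Aux.
Variable R : realType.
Lemma sum_sub_nat (f : nat -> R) (a b c d : nat) (P : pred nat) :
  (forall k, 0 <= f k) -> (forall k, (a <= k < b)%N -> P k -> (c <= k < d)%N) ->
  \sum_(a <= k < b | P k) f k <= \sum_(c <= k < d) f k.
Proof.
move=> f0 H.
rewrite (big_nat_widen _ _ (b + d)) ?leq_addr //.
rewrite (big_nat_widen c d (b+d)) ?leq_addl //.
rewrite (@big_nat_widenl _ _ _ a 0) // (@big_nat_widenl _ _ _ c 0) //.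
rewrite big_mkcond [X in _ <= X]big_mkcond; apply: ler_sum_nat => k /= Hk.
case: ifP => [/andP[/andP[Pk kb] ak]|_]; last by case: ifP.
by have /andP[-> ->] := H k (introT andP (conj ak kb)) Pk.
Qed.

Lemma dyadic_split (f : nat -> R) a c : (a <= c)%N ->
  \sum_(2 ^ a <= k < 2 ^ c) f k = \sum_(a <= t < c) \sum_(2 ^ t <= k < 2 ^ t.+1) f k.
Proof.
elim: c => [|c IH]; first by rewrite leqn0 => /eqP ->; rewrite !big_geq.
rewrite leq_eqVlt => /orP[/eqP ->|]; first by rewrite !big_geq.
rewrite ltnS => ac; rewrite big_nat_recr //= -IH //.
by rewrite -big_cat_nat // ?leq_exp2l.
Qed.
Definition Pb (b : nat -> R) m := \sum_(i < m) b i.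
Definition Db (b : nat -> R) t := `|b t - b t.+1|.
Lemma Pb_diff b j L : \sum_(j <= k < j + L) b k = Pb b (j+L) - Pb b j.
Proof.
rewrite /Pb -!(big_mkord xpredT) (big_cat_nat (leq0n j) (leq_addr L j)) /=.
by rewrite addrC addrK.
Qed.

Definition Vb b i := \sum_(2 ^ i <= t < (2 * 2 ^ i).+1) Db b t.
Definition Yb (b : nat -> R) t := \sum_(2 ^ t <= k < 2 ^ t.+1) `|b k|.

Definition GMhyp (b : nat -> R) (C lam : R) := forall n : nat, (1 <= n)%N ->
      \sum_(n <= k < (2 * n).+1) `|b k - b k.+1|
      <= C / n%:R *
         \sum_(1 <= k < (Num.truncn (lam * n%:R)).+1
                 | (n%:R / lam <= k%:R) && (k%:R <= lam * n%:R)) `|b k|.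

Lemma diff_var b j d : `|b j - b (j + d)%N| <= \sum_(0 <= e < d) Db b (j + e)%N.
Proof.
elim: d => [|d IH]; first by rewrite addn0 subrr normr0 big_geq.
rewrite big_nat_recr //= (le_trans (ler_distD (b (j + d)%N) _ _)) // lerD //.
by rewrite /Db addnS.
Qed.

Lemma block_easy b K (M : R) : (forall m, (m <= 2*K)%N -> `|Pb b m| <= M) ->
  \sum_(K <= j < 2*K) `|b j| <= K%:R * (2*M).
Proof.
move=> HM.
have -> : (K%:R * (2 * M) = \sum_(K <= j < 2*K) (2 * M))%R.
  by rewrite sumr_const_nat mulr_natl; congr (_ *+ _); lia.
apply: ler_sum_nat => j /andP[Kj jK].
have -> : b j = Pb b (j + 1) - Pb b j by rewrite -Pb_diff addn1 big_nat1.
rewrite (le_trans (ler_normB _ _)) // mulr_natl mulr2n lerD // HM //; lia.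
Qed.

Lemma block_main b K L (M : R) : (1 <= L <= K)%N -> (forall m, (m <= 3*K)%N -> `|Pb b m| <= M) ->
  L%:R * \sum_(K <= j < 2*K) `|b j| <=
  K%:R * (2*M) + L%:R * (L%:R * \sum_(K <= t < 3*K) Db b t).
Proof.
move=> /andP[L1 LK] HM.
have step : forall j, (K <= j < 2 * K)%N ->
  L%:R * `|b j| <= 2 * M + L%:R * \sum_(0 <= e < L) Db b (j + e)%N.
  move=> j /andP[Kj jK].
  rewrite -[L%:R]ger0_norm // -normrM.
  have -> : L%:R * b j = \sum_(0 <= d < L) b (j + d)%N + \sum_(0 <= d < L) (b j - b (j + d)%N).
    by rewrite sumrB addrC subrK sumr_const_nat subn0 mulr_natl.
  rewrite (le_trans (ler_normD _ _)) // lerD //.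
    have -> : \sum_(0 <= d < L) b (j + d)%N = \sum_(j <= k < j + L) b k.
      have := big_addn 0 (j + L) j xpredT b; rewrite add0n => ->.
      by rewrite addKn; apply: eq_bigr => i _; rewrite addnC.
    rewrite Pb_diff (le_trans (ler_normB _ _)) // mulr_natl mulr2n lerD // HM //; lia.
  rewrite (le_trans (ler_norm_sum _ _ _)) //.
  rewrite normr_nat.
  have -> : L%:R * \sum_(0 <= e < L) Db b (j + e)%N =
            \sum_(0 <= d < L) \sum_(0 <= e < L) Db b (j + e)%N.
    by rewrite sumr_const_nat subn0 mulr_natl.
  apply: ler_sum_nat => d /andP[_ dL].
  rewrite (le_trans (diff_var _ _ _)) //.
  by rewrite (@sum_sub_nat (fun e => Db b (j + e)%N) 0 d 0 L xpredT) // => [e|e]; [exact: normr_ge0|lia].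
rewrite mulr_sumr; apply: (le_trans (ler_sum_nat step)).
rewrite big_split /= sumr_const_nat -mulr_sumr.
have -> : (2 * K - K = K)%N by lia.
rewrite lerD //; first by rewrite (mulr_natl (2 * M) K).
rewrite ler_pM2l ?ltr0n //.
rewrite exchange_big_nat /=.
have -> : L%:R * \sum_(K <= t < 3 * K) Db b t = \sum_(0 <= e < L) \sum_(K <= t < 3 * K) Db b t.
  by rewrite sumr_const_nat subn0 mulr_natl.
apply: ler_sum_nat => e /andP[_ eL].
have := big_addn K (2 * K + e) e xpredT (Db b); rewrite addnK => <-.
by apply: sum_sub_nat => [t|t]; [exact: normr_ge0|lia].
Qed.
Lemma var_split b i : \sum_(2 ^ i <= t < 3 * 2 ^ i) Db b t <= Vb b i + Vb b i.+1.
Proof.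
rewrite (@big_cat_nat _ _ _ (2 * 2 ^ i)) /=; [|lia|lia].
rewrite /Vb lerD //; apply: sum_sub_nat => [t|t]; try exact: normr_ge0; rewrite ?expnS; lia.
Qed.

Definition wt (T : R) i0 i := T * Num.max 1 ((2 ^ i0)%:R / (2 ^ i)%:R).

Lemma HPw b (T : R) i0 c i m : 0 <= T ->
  (forall m, `|Pb b m| <= T * Num.max m%:R (2 ^ i0)%:R) ->
  (1 <= c)%N -> (m <= c * 2 ^ i)%N -> `|Pb b m| <= (c * 2 ^ i)%:R * wt T i0 i.
Proof.
move=> T0 HP c1 mc; apply: (le_trans (HP m)).
rewrite /wt mulrCA; apply: ler_wpM2l => //.
set X := (2 ^ i0)%:R / (2 ^ i)%:R.
have h1 : (1 : R) <= Num.max 1 X by rewrite le_max lexx.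
have h2 : X <= Num.max 1 X by rewrite le_max lexx orbT.
rewrite ge_max; apply/andP; split.
  by rewrite (le_trans _ (ler_wpM2l _ h1)) // mulr1 ler_nat.
rewrite (le_trans _ (ler_wpM2l _ h2)) // /X.
have -> : ((c * 2 ^ i)%:R * ((2 ^ i0)%:R / (2 ^ i)%:R) : R) = c%:R * (2 ^ i0)%:R.
  by rewrite natrM; field; rewrite pnatr_eq0 expn_eq0.
by rewrite ler_peMl // ler1n.
Qed.

Lemma y_bound b (T : R) i0 s i : 0 <= T ->
  (forall m, `|Pb b m| <= T * Num.max m%:R (2 ^ i0)%:R) ->
  Yb b i / (2 ^ i)%:R <= 6 * (2 ^ s)%:R * wt T i0 i + (Vb b i + Vb b i.+1) / (2 ^ s)%:R.
Proof.
move=> T0 HP.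
have w0 : 0 <= wt T i0 i by rewrite /wt mulr_ge0 // le_max ler01.
have K0 : 0 < ((2 ^ i)%:R : R) by rewrite ltr0n expn_gt0.
have q0 : 0 < ((2 ^ s)%:R : R) by rewrite ltr0n expn_gt0.
have V0 : 0 <= Vb b i + Vb b i.+1 by rewrite addr_ge0 // sumr_ge0 // => t _; exact: normr_ge0.
rewrite /Yb expnS.
case: (leqP s i) => si.
  set L := (2 ^ (i - s))%N.
  have KL : (2 ^ i = L * 2 ^ s)%N by rewrite /L -expnD subnK.
  have := block_main b (2 ^ i) L ((3 * 2 ^ i)%:R * wt T i0 i).
  have L1 : (1 <= L <= 2 ^ i)%N by rewrite /L expn_gt0 /= leq_exp2l //; lia.
  move=> /(_ L1 (fun m h => @HPw b T i0 3 i m T0 HP isT h)).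
  have := var_split b i.
  set Y := \sum_(2 ^ i <= j < 2 * 2 ^ i) `|b j|.
  set V' := \sum_(2 ^ i <= t < 3 * 2 ^ i) Db b t.
  set V := Vb b i + Vb b i.+1; set w := wt T i0 i.
  rewrite KL !natrM.
  set l := (L%:R : R); set q := ((2 ^ s)%:R : R).
  have l0 : 0 < l by rewrite ltr0n /L expn_gt0.
  move=> hV hY.
  have hY' : Y <= 6 * l * q * q * w + l * V.
    rewrite -(ler_pM2l l0) (le_trans hY) //.
    have -> : l * q * (2 * (3 * (l * q) * w)) = l * (6 * l * q * q * w) by ring.
    rewrite -mulrDr ler_pM2l // lerD // ler_pM2l //.
  rewrite ler_pdivrMr ?mulr_gt0 // (le_trans hY') //.
  have -> : (6 * q * w + V / q) * (l * q) = 6 * l * q * q * w + l * V by field; rewrite gt_eqF.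
  done.
have -> : (2 ^ s)%N = (2 ^ i * 2 ^ (s - i))%N by rewrite -expnD subnKC //; lia.
have := block_easy b (2 ^ i) ((2 * 2 ^ i)%:R * wt T i0 i) (fun m h => @HPw b T i0 2 i m T0 HP isT h).
set Y := \sum_(2 ^ i <= j < 2 * 2 ^ i) `|b j|.
set V := Vb b i + Vb b i.+1; set w := wt T i0 i.
rewrite !natrM => hY.
set K := ((2 ^ i)%:R : R); set r := ((2 ^ (s - i))%:R : R).
have r1 : 1 <= r by rewrite ler1n expn_gt0.
rewrite -[X in X <= _]addr0; apply: lerD; last by rewrite divr_ge0 // mulr_ge0 // ?ltW // (le_trans ler01 r1).
rewrite ler_pdivrMr //; apply: (le_trans hY).
have -> : K * (2 * (2%:R * K * w)) = 4 * K * K * w by ring.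
have -> : 6 * (K * r) * w * K = 4 * K * K * w * (3/2 * r) by field.
have h4 : 0 <= 4 * K * K * w by rewrite !mulr_ge0 // ltW.
rewrite ler_peMr //; lra.
Qed.
Lemma GM_step b C lam p i : 0 < C -> 1 < lam -> lam <= (2 ^ p)%:R -> GMhyp b C lam ->
  Vb b i <= C / (2 ^ i)%:R * \sum_(i - p <= t < i + p + 1) Yb b t.
Proof.
move=> C0 lam1 lamp Hgm.
have lam0 : 0 < lam by apply: lt_trans lam1.
have := Hgm (2 ^ i)%N (expn_gt0 _ _); rewrite /Vb /Db => /le_trans; apply.
rewrite ler_pM2l ?divr_gt0 ?ltr0n ?expn_gt0 //.
rewrite /Yb -dyadic_split; last by lia.
apply: sum_sub_nat => [k|k /andP[k1 kT] /andP[lo hi]]; first exact: normr_ge0.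
apply/andP; split.
  case: (leqP i p) => ip.
    by have -> : (i - p = 0)%N by lia.
  rewrite -(ler_nat R); apply: le_trans lo.
  rewrite ler_pdivlMr // (le_trans (ler_wpM2l _ lamp)) // -natrM -expnD.
  by rewrite ler_nat leq_exp2l //; lia.
have : (k <= 2 ^ (i + p))%N.
  rewrite -(ler_nat R); apply: (le_trans hi).
  by rewrite expnD natrM mulrC ler_wpM2l.
move=> h; apply: (leq_ltn_trans h); rewrite ltn_exp2l //; lia.
Qed.
Lemma wt_mono (T : R) i0 j t : 0 <= T -> (j <= t)%N -> wt T i0 t <= wt T i0 j.
Proof.
move=> T0 jt; rewrite /wt ler_wpM2l //.
apply: le_max2 => //; rewrite ler_pM2l ?ltr0n ?expn_gt0 //.
by rewrite lef_pV2 ?posrE ?ltr0n ?expn_gt0 // ler_nat leq_exp2l.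
Qed.

Lemma wt_back (T : R) i0 j t p : 0 <= T -> (j - p <= t)%N -> wt T i0 t <= (2 ^ p)%:R * wt T i0 j.
Proof.
move=> T0 jt; case: (leqP j t) => jt'.
  rewrite (le_trans (@wt_mono T i0 j t T0 jt')) // ler_peMl ?ler1n ?expn_gt0 //.
  by rewrite /wt mulr_ge0 // le_max ler01.
rewrite /wt mulrCA ler_wpM2l //.
have -> : (2 ^ j = 2 ^ t * 2 ^ (j - t))%N by rewrite -expnD subnKC // ltnW.
set X := ((2 ^ i0)%:R / (2 ^ t * 2 ^ (j - t))%:R : R).
have h1 : (1 : R) <= Num.max 1 X by rewrite le_max lexx.
have h2 : X <= Num.max 1 X by rewrite le_max lexx orbT.
have hp : (1 : R) <= (2 ^ p)%:R by rewrite ler1n expn_gt0.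
have X0 : 0 <= X by rewrite divr_ge0 // ler0n.
rewrite ge_max; apply/andP; split.
  by rewrite (le_trans _ (ler_wpM2l _ h1)) ?mulr1 // ler0n.
rewrite (le_trans _ (ler_wpM2l _ h2)) ?ler0n //.
have -> : ((2 ^ i0)%:R / (2 ^ t)%:R : R) = (2 ^ (j - t))%:R * X.
  rewrite /X natrM; field; rewrite !pnatr_eq0 !expn_eq0 //.
rewrite ler_wpM2r // ler_nat leq_exp2l //; lia.
Qed.

Lemma natA j p t : (t < j + p + 1)%N -> (2 ^ t <= 2 ^ (j + p))%N.
Proof. by move=> h; rewrite leq_exp2l //; lia. Qed.
Lemma natB j p : (j + p + 1 - (j - p) <= 2 * p + 1)%N.
Proof. lia. Qed.
Lemma realA (x y u v : R) : y <= v -> x <= u -> v <= u -> x + y <= 2 * u.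
Proof. lra. Qed.
Lemma realB (Z q : R) : Z <= 6 * q + Z / 2 -> Z <= 12 * q.
Proof. lra. Qed.
Lemma alg1 (C Z W K P : R) : K != 0 -> C / K * (Z * (P * W) * (K * P)) = C * P * P * Z * W.
Proof. by move=> K0; field. Qed.
Lemma alg2 (C P N Z W : R) : C * P * P * N * Z * W = C * P * P * Z * W * N.
Proof. by ring. Qed.
Lemma alg3 (G Z W : R) : 2 * (G * Z * W) = Z / 2 * W * (4 * G).
Proof. by field. Qed.

Lemma main_bound b C lam p s (T Mb : R) i0 :
  0 < C -> 1 < lam -> lam <= (2 ^ p)%:R -> GMhyp b C lam ->
  (forall k, `|b k| <= Mb) ->
  4 * (C * (2 ^ p)%:R * (2 ^ p)%:R * (2 * p + 1)%:R) <= (2 ^ s)%:R ->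
  0 <= T -> (forall m, `|Pb b m| <= T * Num.max m%:R (2 ^ i0)%:R) ->
  Vb b i0 <= C * (2 ^ p)%:R * (2 ^ p)%:R * (2 * p + 1)%:R * (12 * (2 ^ s)%:R) * T.
Proof.
move=> C0 lam1 lamp Hgm Hb Hs T0 HP.
set G := C * (2 ^ p)%:R * (2 ^ p)%:R * (2 * p + 1)%:R.
have G0 : 0 <= G by rewrite !mulr_ge0 ?ler0n // ltW.
have Mb0 : 0 <= Mb by apply: le_trans (Hb 0%N).
have q0 : 0 < ((2 ^ s)%:R : R) by rewrite ltr0n expn_gt0.
have Vb0 : forall j, 0 <= Vb b j by move=> j; rewrite sumr_ge0 // => t _; exact: normr_ge0.
have Yb0 : forall j, 0 <= Yb b j by move=> j; rewrite sumr_ge0 // => t _; exact: normr_ge0.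
case: (eqVneq T 0) => [T00|Tn0].

  have Pb0 : forall m, Pb b m = 0.
    by move=> m; apply/eqP; rewrite -normr_eq0 eq_le normr_ge0 andbT (le_trans (HP m)) // T00 mul0r.
  rewrite T00 mulr0; apply: le_trans (lexx _) ; rewrite /Vb big1 // => t _.
  have hb : forall k, b k = 0.
    move=> k; have := Pb_diff b k 1; rewrite addn1 big_nat1 => ->; by rewrite !Pb0 subrr.
  by rewrite /Db !hb subrr normr0.
have Tp : 0 < T by rewrite lt_neqAle eq_sym Tn0 T0.
set w := wt T i0.
have wT : forall t, T <= w t.
  by move=> t; rewrite /w /wt ler_peMr // le_max lexx.
have w0 : forall t, 0 < w t by move=> t; apply: lt_le_trans (wT t).
set z := fun t => Yb b t / (2 ^ t)%:R / w t.
have zub : forall t, z t <= Mb / T.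
  move=> t; rewrite /z.
  have hY : Yb b t / (2 ^ t)%:R <= Mb.
    rewrite ler_pdivrMr ?ltr0n ?expn_gt0 // /Yb.
    apply: (le_trans (@ler_sum_nat _ _ _ _ (fun _ => Mb) _)); first by move=> k _; exact: Hb.
    rewrite sumr_const_nat expnS mulr_natr.
    by have -> : (2 * 2 ^ t - 2 ^ t = 2 ^ t)%N by lia.
  rewrite ler_pdivrMr // (le_trans hY) //.
  idtac.
  apply: (le_trans _ (ler_wpM2l (divr_ge0 Mb0 (ltW Tp)) (wT t))).
  by rewrite divfK.
set q := ((2 ^ s)%:R : R).
have Zne : range z !=set0 by exists (z 0%N), 0%N.
have Zsup : has_sup (range z).
  by split => //; exists (Mb / T) => y [t _ <-]; exact: zub t.
set Z := sup (range z).
have zZ : forall t, z t <= Z by move=> t; apply: sup_upper_bound => //; exists t.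
have Z0 : 0 <= Z.
  by apply: le_trans (zZ 0%N); rewrite /z !divr_ge0 // ?ltW // ?ler0n.
have yZ : forall t, Yb b t / (2 ^ t)%:R <= Z * w t.
  by move=> t; have := zZ t; rewrite /z ler_pdivrMr.
have Vz : forall j, Vb b j <= G * Z * w j.
  move=> j; apply: (le_trans (@GM_step b C lam p j C0 lam1 lamp Hgm)).
  rewrite mulr_sumr.
  set c := C * (2 ^ p)%:R * (2 ^ p)%:R * Z * w j.
  apply: (@le_trans _ _ (\sum_(j - p <= t < j + p + 1) c)).
    apply: ler_sum_nat => t /andP[lo hi].
    have h1 : Yb b t <= Z * ((2 ^ p)%:R * w j) * (2 ^ t)%:R.
      rewrite -ler_pdivrMr ?ltr0n ?expn_gt0 // (le_trans (yZ t)) //.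
      by rewrite ler_wpM2l // (@wt_back T i0 j t p T0 lo).
    have h2 : ((2 ^ t)%:R : R) <= (2 ^ j)%:R * (2 ^ p)%:R.
      by rewrite -natrM -expnD ler_nat natA.
    have h3 : 0 <= Z * ((2 ^ p)%:R * w j) by rewrite mulr_ge0 // mulr_ge0 // ltW.
    have h4 : 0 <= C / (2 ^ j)%:R by rewrite divr_ge0 ?ltW.
    apply: (le_trans (ler_wpM2l h4 (le_trans h1 (ler_wpM2l h3 h2)))).
    by rewrite /c alg1 // pnatr_eq0 expn_eq0.
  rewrite sumr_const_nat.
  have -> : G * Z * w j = c *+ (2 * p + 1).
    by rewrite /c /G alg2 (mulr_natr (C * (2 ^ p)%:R * (2 ^ p)%:R * Z * w j)).
  rewrite -!(mulr_natr c); apply: ler_wpM2l; [rewrite /c !mulr_ge0 // ltW // | by rewrite ler_nat natB].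
have zb : forall i, z i <= 6 * q + Z / 2.
  move=> i; rewrite /z ler_pdivrMr //.
  apply: (le_trans (@y_bound b T i0 s i T0 HP)).
  have hV : Vb b i + Vb b i.+1 <= 2 * (G * Z * w i).
    have := Vz i; have := Vz i.+1; have := @wt_mono T i0 i i.+1 T0 (leqnSn i).
    rewrite -/w => hw h1 h2.
    have : G * Z * w i.+1 <= G * Z * w i by rewrite ler_wpM2l // mulr_ge0.
    move=> h3.
    rewrite (mulr_natl (G * Z * w i) 2) mulr2n; exact: lerD h2 (le_trans h1 h3).
  rewrite [X in _ <= X]mulrDl; apply: lerD; first exact: lexx.
  rewrite ler_pdivrMr // (le_trans hV) //.
  rewrite alg3.
  by rewrite ler_wpM2l // mulr_ge0 // ?divr_ge0 // ltW.
have ZZ : Z <= 12 * q.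
  apply: realB; by apply: ge_sup => // y [t _ <-]; exact: zb t.
apply: (le_trans (Vz i0)).
have -> : w i0 = T by rewrite /w /wt divff ?pnatr_eq0 ?expn_eq0 // maxxx mulr1.
by rewrite ler_wpM2r // ler_wpM2l.
Qed.
Lemma realD (x m : R): 1 <= x -> x <= m -> x + 1 <= 2 * m * 1.
Proof. lra. Qed.
Lemma realE (x M N r K : R): 0 <= r -> N <= M -> r * N = K -> x + 1 <= 2 * K -> x + 1 <= 2 * M * r.
Proof. move=> r0 NM e h; nra. Qed.
Lemma realF (S J A m T M : R): 0 < J -> 0 < m -> 0 <= A -> S / J <= A -> m * A <= T -> J <= 2 * M * m -> S <= 2 * T * M.
Proof.
move=> J0 m0 A0 h1 h2 h3.
have h1' : S <= J * A by rewrite -ler_pdivrMl // mulrC.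
have T0 : 0 <= T by apply: le_trans h2; rewrite mulr_ge0 // ltW.
have : S * m <= 2 * T * M * m by nra.
by rewrite ler_pM2r.
Qed.

Lemma realG (T u v U V : R) : 0 <= T -> 0 <= U -> 0 <= V -> u <= 2 * U -> v <= 2 * V ->
  2 * T * Num.max u v <= 4 * T * Num.max U V.
Proof.
move=> T0 U0 V0 hu hv.
have hm : Num.max u v <= 2 * Num.max U V.
  rewrite ge_max; apply/andP; split.
    by apply: (le_trans hu); rewrite ler_pM2l // le_max lexx.
  by apply: (le_trans hv); rewrite ler_pM2l // le_max lexx orbT.
have -> : 4 * T * Num.max U V = 2 * T * (2 * Num.max U V) by ring.
by rewrite ler_wpM2l // mulr_ge0.
Qed.

Lemma ahat_ge (a : int -> R) k j : (2 ^ k <= j < 2 ^ k.+1)%N ->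
  `|psum a (Posz j)| / (j%:R + 1) <= ahat a k.
Proof.
move=> hj; rewrite /ahat.
apply: le_trans (@le_bigmax_seq _ _ _ _ 0 j xpredT _ _ _) => //; last by rewrite mem_index_iota.
by rewrite le_max lexx.
Qed.

Lemma ahat_ge0 (a : int -> R) k : 0 <= ahat a k.
Proof. exact: bigmax_ge_id. Qed.

Lemma psum_pos (a : int -> R) j : psum a (Posz j) = Pb (fun k => a (Posz k)) j.+1.
Proof. by rewrite /psum /Pb /= big_mkord. Qed.

Lemma Sbound (a : int -> R) n T :
  (forall k, Num.min 1 ((2:R) ^ (Posz k - Posz n)) * ahat a k <= T) ->
  forall j, (1 <= j)%N -> `|Pb (fun k => a (Posz k)) j.+1| <= 2 * T * Num.max j%:R (2 ^ n)%:R.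
Proof.
move=> HT j j1.
set k := trunc_log 2 j.
have hk : (2 ^ k <= j < 2 ^ k.+1)%N by rewrite trunc_logP // trunc_log_ltn.
have := @ahat_ge a k j hk; rewrite psum_pos; set S := `|Pb _ _| => hS.
have := HT k; set r := (2:R) ^ (Posz k - Posz n) => hT.
have r0 : 0 < r by rewrite exprz_gt0.
have er : r * (2 ^ n)%:R = (2 ^ k)%:R.
  rewrite !natrX !exprnP /r -expfzDr ?subrK //.
have m0 : 0 < Num.min 1 r by rewrite lt_min ltr01 r0.
have j0 : (0 : R) < j%:R + 1 by rewrite ltr_wpDl // ler0n.
have key : j%:R + 1 <= 2 * Num.max j%:R (2 ^ n)%:R * Num.min 1 r.
  case: (leP 1 r) => h.
    apply: realD; first by rewrite ler1n.
    by rewrite le_max lexx.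
  have hj2 : j%:R + 1 <= 2 * ((2 ^ k)%:R : R).
    have : (j.+1 <= 2 * 2 ^ k)%N by rewrite -expnS; case/andP: hk.
    by rewrite -(ler_nat R) natrM -natr1.
  apply: (@realE _ _ (2 ^ n)%:R _ (2 ^ k)%:R); [exact: ltW r0 | by rewrite le_max lexx orbT | exact: er | exact: hj2].
apply: (@realF S (j%:R + 1) (ahat a k) (Num.min 1 r)); [exact: j0|exact: m0|exact: ahat_ge0|exact: hS|exact: hT|exact: key].
Qed.
Lemma dyadic_le (a : int -> R) n' : (forall k : int, (k <= 0)%R -> a k = 0) ->
  dyadic_var a n'.+1 <= Vb (fun k => a (Posz k)) n'.
Proof.
move=> a0; rewrite /dyadic_var /Vb expnS mul2n doubleK.
apply: (@le_trans _ _ (\sum_(2 ^ n' <= j < (2 ^ n').*2) Db (fun k => a (Posz k)) j)).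
  apply: ler_sum_nat => j /andP[lo hi].
  have j0 : (j != 0)%N by rewrite -lt0n (leq_trans _ lo) // expn_gt0.
  rewrite (negbTE j0) /Dabs.
  have jp : (0 < Posz j)%R by rewrite ltz_nat lt0n.
  rewrite jp oppr_gt0 ltNge (ltW jp) /= oppr_lt0 jp.
  rewrite (a0 (- Posz j)) ?oppr_le0 ?(ltW jp) // (a0 (- Posz j - 1)); last by lia.
  have -> : (Posz j + 1)%R = Posz j.+1 by rewrite -PoszD addn1.
  by rewrite subrr normr0 addr0.
by apply: sum_sub_nat => [t|t]; [exact: normr_ge0 | lia].
Qed.

Lemma dyadic0 (a : int -> R) : (forall k : int, (k <= 0)%R -> a k = 0) ->
  dyadic_var a 0 = `|Pb (fun k => a (Posz k)) 2|.
Proof.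
move=> a0; rewrite /dyadic_var /= big_nat1 /Dabs ltxx /=.
rewrite (a0 0) // (a0 (-1)) // /Pb big_ord_recl big_ord1 /=.
by rewrite (a0 0) // !sub0r oppr0 normr0 addr0 normrN add0r.
Qed.
End Aux.

Theorem mainTheorem12 (R : realType) (a : int -> R) :
  (forall k : int, (k <= 0)%R -> a k = 0) ->
  GM (fun k : nat => a (Posz k)) ->
  (fun k : nat => a (Posz k)) @ \oo --> (0 : R) ->
  GMbar a.
Proof.
move=> a0 [C [lam [C0 [lam1 Hgm]]]] Hcv.
have [Mb HMb] : exists Mb : R, forall k, `|a (Posz k)| <= Mb.
  have : cvgn (fun k : nat => a (Posz k)) by apply/cvg_ex; exists 0.
  move/cvg_seq_bounded => [M [_ HM]].
  exists (`|M| + 1) => k; apply: (HM (`|M| + 1)) => //.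
  by rewrite (le_lt_trans (ler_norm _)) // ltrDl.
set p := Num.truncn lam.
have lamp : lam <= (2 ^ p)%:R.
  apply: (le_trans (ltW (truncnS_gt lam))); rewrite ler_nat; exact: ltn_expl.
set G := C * (2 ^ p)%:R * (2 ^ p)%:R * (2 * p + 1)%:R.
set s := Num.truncn (4 * G).
have Hs : 4 * G <= (2 ^ s)%:R.
  apply: (le_trans (ltW (truncnS_gt _))); rewrite ler_nat; exact: ltn_expl.
exists (Num.max 2 (G * (12 * (2 ^ s)%:R) * 4)); split.
  by rewrite lt_max ltr0n.
move=> n.
set f := (fun k : nat => _).
case E: (ereal_sup (range f)) => [T| |]; last 2 first.
- by rewrite muleC gt0_mulye ?leey // lte_fin lt_max ltr0n.
- have : (f 0%N <= ereal_sup (range f))%E by apply: ereal_sup_ubound; exists 0%N.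
  by rewrite E leeNy_eq.
have HT : forall k, Num.min 1 ((2:R) ^ (Posz k - Posz n)) * ahat a k <= T.
  by move=> k; rewrite -lee_fin -E; apply: ereal_sup_ubound; exists k.
rewrite -EFinM lee_fin.
set C' := Num.max 2 (G * (12 * (2 ^ s)%:R) * 4).
have T0 : 0 <= T.
  have := HT 0%N; apply: le_trans.
  by rewrite mulr_ge0 ?ahat_ge0 // le_min ler01 ltW // exprz_gt0.
have hS := @Sbound R a n T HT.
case: n HT hS {E f} => [|n'] HT hS.
  rewrite dyadic0 //; have := hS 1%N isT.
  rewrite expn0 maxxx mulr1 => h; apply: (le_trans h).
  by rewrite ler_wpM2r // le_max lexx.
apply: (le_trans (@dyadic_le R a n' a0)).
have T4 : 0 <= 4 * T by rewrite mulr_ge0.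
have HP : forall m, `|@Pb R (fun k => a (Posz k)) m| <= (4 * T) * Num.max m%:R (2 ^ n')%:R.
  case => [|[|j]].
  - by rewrite /Pb big_ord0 normr0 mulr_ge0 // le_max ler0n.
  - by rewrite /Pb big_ord1 (a0 0) // normr0 mulr_ge0 // le_max ler0n.
  - apply: (le_trans (hS j.+1 isT)); apply: realG => //; rewrite ?ler0n //.
      by rewrite -natrM ler_nat (leq_trans (leqnSn _)) // leq_pmull.
    by rewrite expnS natrM.
have := @main_bound R (fun k => a (Posz k)) C lam p s (4 * T) Mb n' C0 lam1 lamp Hgm HMb Hs T4 HP.
move/le_trans; apply.
rewrite -/G.
rewrite [_ * (4 * T)]mulrA; apply: ler_wpM2r => //.
by rewrite /C' le_max lexx orbT.
Qed.
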